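(* Let $s,t$ be positive integers and $k,l,r$ nonnegative integers. Put $$a=-\frac{l(s+t)+s}{s+t},\qquad b=\frac{k(s+t)+s}{s+t},$$ and define $$P(x)=\left(\frac{x+1}{2}\right)^{k(s+t)+s}J_{l+r}(a,b,x)^{s+t},\qquad Q(x)=\left(\frac{x-1}{2}\right)^{l(s+t)+s}J_{k+r}(-a,-b,x)^{s+t}.$$ Then $\deg(P-Q)\le m$, where $m=(k+l+r)(s+t-1)+s-r-1$.
   Context: For a nonnegative integer $N$ and complex parameters $\alpha,\beta$, the (generalized) Jacobi polynomial is $J_N(\alpha,\beta,x)=\sum_{j=0}^{N}\binom{N+\alpha+\beta+j}{j}\binom{N+\alpha}{N-j}\left(\frac{x-1}{2}\right)^j$, where $\binom{y}{j}=y(y-1)\cdots(y-j+1)/j!$ for arbitrary $y$. Here $a+b=k-l$. The polynomials $P,Q$ have degree $(s+t)(k+l+r)+s$ and $m$ equals this degree minus $k+l+2r+1$; this is the Davenport–Zannier pair for the ''odd double brush'' weighted tree. *)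

(* Defs.v *)
From mathcomp Require Import all_boot all_order all_algebra.
Set Implicit Arguments. Unset Strict Implicit. Unset Printing Implicit Defensive.
Import Order.TTheory GRing.Theory Num.Theory.
Local Open Scope ring_scope.

Definition gbinom (R : fieldType) (y : R) (j : nat) : R :=
  (\prod_(i < j) (y - i%:R)) / (j`!)%:R.

Definition jacobi (R : fieldType) (N : nat) (alpha beta : R) : {poly R} :=
  \sum_(j < N.+1)
     (gbinom (N%:R + alpha + beta + j%:R) j * gbinom (N%:R + alpha) (N - j)%N)
       *: ((2^-1) *: ('X - 1)) ^+ j.

(* Main.v *)
Require Import Defs.
From mathcomp Require Import all_boot all_order all_algebra.
From mathcomp Require Import ring zify.
Import Order.TTheory GRing.Theory Num.Theory.
Local Open Scope ring_scope.



Lemma gb0 (y : rat) : gbinom y 0 = 1.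
Proof. by rewrite /gbinom big_ord0 fact0 divr1. Qed.

Lemma gb1 (y : rat) j : gbinom (y + 1) j.+1 * j.+1%:R = (y + 1) * gbinom y j.
Proof.
rewrite /gbinom big_ord_recl /= subr0.
have -> : \prod_(i < j) (y + 1 - (bump 0 i)%:R) = \prod_(i < j) (y - i%:R).
  by apply: eq_bigr => i _; rewrite /bump /= add1n -natr1; ring.
rewrite factS natrM.
have hj : j.+1%:R != 0 :> rat by rewrite pnatr_eq0.
have hf : (j`!)%:R != 0 :> rat by rewrite pnatr_eq0 -lt0n fact_gt0.
by field; move: hj; rewrite hf -natr1 addrC.
Qed.

Lemma gb2 (z : rat) m : gbinom z m.+1 * m.+1%:R = gbinom z m * (z - m%:R).
Proof.
rewrite /gbinom big_ord_recr /= factS natrM.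
have hj : m.+1%:R != 0 :> rat by rewrite pnatr_eq0.
have hf : (m`!)%:R != 0 :> rat by rewrite pnatr_eq0 -lt0n fact_gt0.
by field; move: hj; rewrite hf -natr1 addrC.
Qed.

Lemma gbnat (K j : nat) : (j <= K)%N -> gbinom (K%:R : rat) j = 'C(K, j)%:R.
Proof.
move=> hj; rewrite /gbinom.
have -> : \prod_(i < j) (K%:R - i%:R : rat) = (K ^_ j)%:R.
  rewrite ffact_prod natr_prod; apply: eq_bigr => i _.
  by rewrite natrB // (leq_trans (ltnW (ltn_ord i))).
rewrite -bin_ffact natrM.
have hf : (j`!)%:R != 0 :> rat by rewrite pnatr_eq0 -lt0n fact_gt0.
by rewrite mulfK.
Qed.



Definition cf N (al be : rat) j : rat :=
  if (j <= N)%N then gbinom (N%:R + al + be + j%:R) j * gbinom (N%:R + al) (N - j) else 0.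
Definition jy N al be : {poly rat} := \poly_(j < N.+1) cf N al be j.

Lemma coef_jy N al be i : (jy N al be)`_i = cf N al be i.
Proof. by rewrite /jy coef_poly ltnS; case: ifP => // h; rewrite /cf h. Qed.

Lemma cf_rec N al be i :
  i.+1%:R * (i%:R + al + 1) * cf N al be i.+1 =
  (N%:R - i%:R) * (N%:R + i%:R + al + be + 1) * cf N al be i.
Proof.
rewrite /cf; case: (ltngtP i N) => h.
- have [d hd] : exists d, N = (i + d).+1 by exists (N - i.+1)%N; lia.
  have -> : (N - i.+1 = d)%N by lia.
  have -> : (N - i = d.+1)%N by lia.
  set y := N%:R + al + be + i%:R.
  have -> : N%:R + al + be + i.+1%:R = y + 1 by rewrite /y -natr1; ring.
  have E1 : i.+1%:R * (i%:R + al + 1) * (gbinom (y + 1) i.+1 * gbinom (N%:R + al) d)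
      = (gbinom (y + 1) i.+1 * i.+1%:R) * ((i%:R + al + 1) * gbinom (N%:R + al) d) by ring.
  have E2 : (N%:R - i%:R) * (N%:R + i%:R + al + be + 1) * (gbinom y i * gbinom (N%:R + al) d.+1)
      = (gbinom (N%:R + al) d.+1 * d.+1%:R) * (gbinom y i * (y + 1)).
    by rewrite /y hd -!natr1 !natrD; ring.
  rewrite E1 E2 gb1 gb2 /y hd -!natr1 !natrD; ring.
- by rewrite !mulr0.
- by rewrite h subrr !mul0r mulr0.
Qed.

Lemma eq_by_diff (x y d : rat) : d = 0 -> x - y = d -> x = y.
Proof. by move=> -> /eqP; rewrite subr_eq0 => /eqP. Qed.

Lemma ode N al be (j := jy N al be) :
  'X * ('X + 1) * j^`()^`() + ((al + 1)%:P + (al + be + 2)%:P * 'X) * j^`()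
  = (N%:R * (N%:R + al + be + 1))%:P * j.
Proof.
have -> : 'X * ('X + 1) * j^`()^`() + ((al + 1)%:P + (al + be + 2)%:P * 'X) * j^`()
  = 'X * ('X * j^`()^`()) + 'X * j^`()^`() + (al + 1)%:P * j^`()
     + (al + be + 2)%:P * ('X * j^`()) by ring.
apply/polyP => i; rewrite !(coefD, coefXM, coefCM, coef_deriv) /j !coef_jy.
have R := cf_rec N al be i.
case: i R => [|[|i]] R /=;
  move/eqP: R; rewrite -subr_eq0 => /eqP R; apply: (eq_by_diff _ _ _ R); ring.
Qed.



Definition gW (al be : rat) (j1 j2 : {poly rat}) : {poly rat} :=
  'X * ('X + 1) * (j1^`() * j2 - j1 * j2^`()) + (al%:P * ('X + 1) + be%:P * 'X) * j1 * j2.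

Lemma gW_deriv N1 N2 al be : N2%:R = N1%:R + al + be ->
  (gW al be (jy N1 al be) (jy N2 (-al) (-be)))^`() = 0.
Proof.
move=> HN.
have O1 := ode N1 al be; have O2 := ode N2 (-al) (-be).
set j1 := jy N1 al be in O1 *; set j2 := jy N2 (-al) (-be) in O2 *.
have d1 : (1:{poly rat})^`() = 0 by rewrite -polyC1 derivC.
transitivity (('X * ('X + 1) * j1^`()^`() + ((al + 1)%:P + (al + be + 2)%:P * 'X) * j1^`()
   - (N1%:R * (N1%:R + al + be + 1))%:P * j1) * j2
   - j1 * ('X * ('X + 1) * j2^`()^`() + ((- al + 1)%:P + (- al + - be + 2)%:P * 'X) * j2^`()
   - (N2%:R * (N2%:R + - al + - be + 1))%:P * j2)); last first.
  by rewrite O1 O2 !subrr mul0r mulr0 subrr.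
rewrite HN /gW !(derivD, derivM, derivB, derivN, derivX, derivC, d1).
rewrite !(polyCD, polyCN, polyCM, polyC_natr, polyC1).

ring.
Qed.

Lemma deriv0_size (p : {poly rat}) : p^`() = 0 -> (size p <= 1)%N.
Proof.
move=> h; apply/leq_sizeP => [[|j]] // _.
have := congr1 (fun q : {poly rat} => q`_j) h.
rewrite coef_deriv coef0 => /eqP; rewrite mulrn_eq0 /= => /eqP //.
Qed.

Lemma dexpS (p : {poly rat}) n : (p ^+ n.+1)^`() = p^`() * p ^+ n *+ n.+1.
Proof. exact: deriv_exp. Qed.

Lemma W_id (al be : rat) (A B n : nat) (j1 j2 : {poly rat}) :
  n.+1%:R * al = - B.+1%:R -> n.+1%:R * be = A.+1%:R ->
  (('X + 1) ^+ A.+1 * j1 ^+ n.+1)^`() * ('X ^+ B.+1 * j2 ^+ n.+1)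
  - (('X + 1) ^+ A.+1 * j1 ^+ n.+1) * ('X ^+ B.+1 * j2 ^+ n.+1)^`()
  = (('X + 1) ^+ A * 'X ^+ B * (j1 ^+ n * j2 ^+ n)) * (n.+1%:R * gW al be j1 j2).
Proof.
move=> Ha Hb.
have Ha' : (n.+1%:R : {poly rat}) * al%:P = - B.+1%:R
  by rewrite -polyC_natr -polyCM Ha polyCN polyC_natr.
have Hb' : (n.+1%:R : {poly rat}) * be%:P = A.+1%:R
  by rewrite -polyC_natr -polyCM Hb polyC_natr.
have E : n.+1%:R * gW al be j1 j2 =
   A.+1%:R * 'X * j1 * j2 + n.+1%:R * 'X * ('X + 1) * (j1^`() * j2 - j1 * j2^`())
   - B.+1%:R * ('X + 1) * j1 * j2.
  rewrite /gW.
  transitivity (A.+1%:R * 'X * j1 * j2 + n.+1%:R * 'X * ('X + 1) * (j1^`() * j2 - j1 * j2^`())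
   - B.+1%:R * ('X + 1) * j1 * j2 + (n.+1%:R * al%:P + B.+1%:R) * (('X + 1) * j1 * j2)
   + (n.+1%:R * be%:P - A.+1%:R) * ('X * j1 * j2)); first by ring.
  by rewrite Ha' Hb' addNr subrr !mul0r !addr0.
have d1 : (1:{poly rat})^`() = 0 by rewrite -polyC1 derivC.
transitivity ((('X + 1) ^+ A * 'X ^+ B * (j1 ^+ n * j2 ^+ n)) *
   (A.+1%:R * 'X * j1 * j2 + n.+1%:R * 'X * ('X + 1) * (j1^`() * j2 - j1 * j2^`())
   - B.+1%:R * ('X + 1) * j1 * j2)); last by congr (_ * _); symmetry; exact: E.
have e0 : ('X + 1 : {poly rat})^`() = 1 by rewrite derivD derivX d1 addr0.
have eX : ('X : {poly rat})^`() = 1 by rewrite derivX.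
move: ('X + 1) e0 => U e0. move: ('X : {poly rat}) eX => Xv eX.
rewrite !derivM !dexpS e0 eX !exprS.
ring.
Qed.



Lemma size_expS (p : {poly rat}) d m : size p = d.+1 -> size (p ^+ m) = (d * m).+1.
Proof.
move=> hp; have p0 : p != 0 by rewrite -size_poly_eq0 hp.
have := size_exp p m; rewrite hp /= => <-.
by rewrite prednK // lt0n size_poly_eq0 expf_neq0.
Qed.

Lemma size_mulS (p q : {poly rat}) a b :
  size p = a.+1 -> size q = b.+1 -> size (p * q) = (a + b).+1.
Proof.
move=> hp hq; have p0 : p != 0 by rewrite -size_poly_eq0 hp.
have q0 : q != 0 by rewrite -size_poly_eq0 hq.
by rewrite size_mul // hp hq addSn addnS.
Qed.

Lemma size_sub_eqlead (u v : {poly rat}) S :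
  size u = S.+1 -> size v = S.+1 -> lead_coef u = lead_coef v -> (size (u - v)%R <= S)%N.
Proof.
move=> hu hv hl; apply/leq_sizeP => j hj; rewrite coefB.
case: (ltngtP S j) => h.
- have /leq_sizeP -> // : (size u <= j)%N by rewrite hu.
  have /leq_sizeP -> // : (size v <= j)%N by rewrite hv.
- lia.
- by move: hl; rewrite !lead_coefE hu hv /= -h => ->; rewrite subrr.
Qed.

Lemma size_sub_neqlead (u v : {poly rat}) S :
  size u = S.+1 -> size v = S.+1 -> lead_coef u != lead_coef v -> size (u - v) = S.+1.
Proof.
move=> hu hv hl; apply/eqP; rewrite eqn_leq; apply/andP; split.
  by rewrite (leq_trans (size_polyD _ _)) // size_polyN hu hv maxnn.
rewrite ltnNge; apply/negP => /leq_sizeP /(_ S (leqnn _)) /eqP.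
have e1 : u`_S = lead_coef u by rewrite lead_coefE hu.
have e2 : v`_S = lead_coef v by rewrite lead_coefE hv.
by rewrite coefB subr_eq0 e1 e2 (negbTE hl).
Qed.

Lemma deriv_sizeS (p : {poly rat}) d : size p = d.+2 ->
  size p^`() = d.+1 /\ lead_coef p^`() = lead_coef p * d.+1%:R.
Proof.
move=> hp; have p0 : p != 0 by rewrite -size_poly_eq0 hp.
have c0 : p`_d.+1 != 0 by rewrite -[d.+1]/(d.+2.-1) -hp -lead_coefE lead_coef_eq0.
have s1 : size p^`() = d.+1.
  apply/eqP; rewrite eqn_leq; apply/andP; split.
    by have := lt_size_deriv p0; rewrite hp.
  rewrite ltnNge; apply/negP => /leq_sizeP /(_ d (leqnn _)) /eqP.
  by rewrite coef_deriv mulrn_eq0 /= (negbTE c0).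
split => //; rewrite lead_coefE s1 /= coef_deriv lead_coefE hp /=.
by rewrite mulr_natr.
Qed.

Lemma wr_size (R q : {poly rat}) D : size q = D.+2 -> R != 0 -> (size R <= D.+1)%N ->
  size (R^`() * q - R * q^`()) = ((size R).-1 + D.+1)%N.
Proof.
move=> hq R0 hR.
have [sq lq] := deriv_sizeS _ _ hq.
have q0 : q != 0 by rewrite -size_poly_eq0 hq.
case hs : (size R) => [|[|d]].
- by move/eqP: hs; rewrite size_poly_eq0 (negbTE R0).
- have -> : R^`() = 0.
    by apply/eqP; rewrite -size_poly_eq0 -leqn0 -ltnS -hs lt_size_deriv.
  by rewrite mul0r sub0r size_polyN (size_mulS _ _ _ _ hs sq).
- have [sR lR] := deriv_sizeS _ _ hs.
  have -> : (d.+2.-1 + D.+1 = (d + D.+1).+1)%N by lia.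
  apply: size_sub_neqlead.
  + by rewrite (size_mulS _ _ _ _ sR hq); lia.
  + by rewrite (size_mulS _ _ _ _ hs sq); lia.
  rewrite !lead_coefM lR lq -!mulrA; apply/negP => /eqP.
  move/mulfI; rewrite lead_coef_eq0 => /(_ R0).
  rewrite mulrC; move/mulfI; rewrite lead_coef_eq0 => /(_ q0) /eqP.
  rewrite eqr_nat => /eqP h; rewrite hs in hR; lia.
Qed.



Definition Yp : {poly rat} := (2^-1) *: ('X - 1).

Lemma size_Yp : size Yp = 2%N.
Proof. by rewrite /Yp size_scale // -polyC1 size_XsubC. Qed.

Lemma jac_comp N al be : jacobi N al be = jy N al be \Po Yp.
Proof.
rewrite /jacobi /jy poly_def raddf_sum; apply: eq_bigr => i _.
by rewrite /= comp_polyZ comp_Xn_poly /cf -ltnS ltn_ord.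
Qed.

Lemma Y1_comp : (2^-1) *: ('X + 1) = ('X + 1) \Po Yp :> {poly rat}.
Proof.
rewrite rmorphD /= comp_polyX rmorph1 /Yp scalerDr scalerBr.
rewrite -addrA; congr (_ + _).
rewrite !alg_polyC -polyCN -polyC1 -polyCD; congr (_%:P); field.
Qed.

Theorem mainTheorem5 (s t k l r : nat) (hs : (0 < s)%N) (ht : (0 < t)%N) :
  let a : rat := - ((l * (s + t) + s)%N%:R / (s + t)%N%:R) in
  let b : rat := (k * (s + t) + s)%N%:R / (s + t)%N%:R in
  let P : {poly rat} := ((2^-1) *: ('X + 1)) ^+ (k * (s + t) + s)
                          * (jacobi (l + r) a b) ^+ (s + t) in
  let Q : {poly rat} := ((2^-1) *: ('X - 1)) ^+ (l * (s + t) + s)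
                          * (jacobi (k + r) (- a) (- b)) ^+ (s + t) in
  let m : int := (k + l + r)%:Z * ((s + t)%:Z - 1) + s%:Z - r%:Z - 1 in
  ((size (P - Q))%:Z - 1 <= m)%R.
Proof.
cbv zeta.
set a : rat := - ((l * (s + t) + s)%N%:R / (s + t)%N%:R).
set b : rat := (k * (s + t) + s)%N%:R / (s + t)%N%:R.
set P : {poly rat} := ((2^-1) *: ('X + 1)) ^+ (k * (s + t) + s) * (jacobi (l + r) a b) ^+ (s + t).
set Q : {poly rat} := ((2^-1) *: ('X - 1)) ^+ (l * (s + t) + s) * (jacobi (k + r) (- a) (- b)) ^+ (s + t).
set m : int := (k + l + r)%:Z * ((s + t)%:Z - 1) + s%:Z - r%:Z - 1.
have hn0 : (s + t)%N%:R != 0 :> rat by rewrite pnatr_eq0; lia.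
have HN : (k + r)%N%:R = (l + r)%N%:R + a + b :> rat.
  rewrite /a /b; move: hn0; rewrite !(natrD, natrM) => hn0; by field.
have [n0 Hn] : exists n0, (s + t)%N = n0.+1 by exists (s + t).-1; lia.
have [A HA] : exists A, (k * (s + t) + s)%N = A.+1 by exists (k * (s + t) + s).-1; lia.
have [B HB] : exists B, (l * (s + t) + s)%N = B.+1 by exists (l * (s + t) + s).-1; lia.
have Ha : n0.+1%:R * a = - B.+1%:R.
  by rewrite /a -HB -Hn mulrN mulrC divfK.
have Hb : n0.+1%:R * b = A.+1%:R.
  by rewrite /b -HA -Hn mulrC divfK.
set j1 := jy (l + r) a b.
set j2 := jy (k + r) (- a) (- b).
have HP : P = (('X + 1) ^+ (k * (s + t) + s) * j1 ^+ (s + t)) \Po Yp.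
  by rewrite /P jac_comp Y1_comp rmorphM /= !rmorphXn.
have HQ : Q = ('X ^+ (l * (s + t) + s) * j2 ^+ (s + t)) \Po Yp.
  by rewrite /Q jac_comp rmorphM /= !rmorphXn /= comp_polyX.
rewrite HP HQ -rmorphB /= size_comp_poly2 ?size_Yp // HA HB Hn.
rewrite Hn in HA HB.
set K := ((l + r) + (k + r))%N.
have c1E : cf (l + r) a b (l + r) = 'C(K, l + r)%:R.
  rewrite /cf leqnn subnn gb0 mulr1 -gbnat ?leq_addr //.
  by congr gbinom; rewrite /K (natrD _ (l + r) (k + r)) HN; ring.
have c2E : cf (k + r) (- a) (- b) (k + r) = 'C(K, l + r)%:R.
  rewrite /cf leqnn subnn gb0 mulr1 -(@bin_sub K (l + r)) ?leq_addr //.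
  have -> : (K - (l + r) = k + r)%N by rewrite /K; lia.
  rewrite -gbnat ?leq_addl //.
  by congr gbinom; rewrite /K (natrD _ (l + r) (k + r)) HN; ring.
have cnz : 'C(K, l + r)%:R != 0 :> rat by rewrite pnatr_eq0 -lt0n bin_gt0 /K leq_addr.
have sj1 : size j1 = (l + r).+1 by rewrite /j1 /jy size_poly_eq //= c1E.
have sj2 : size j2 = (k + r).+1 by rewrite /j2 /jy size_poly_eq //= c2E.
have lj1 : lead_coef j1 = 'C(K, l + r)%:R by rewrite /j1 /jy lead_coef_poly //= c1E.
have lj2 : lead_coef j2 = 'C(K, l + r)%:R by rewrite /j2 /jy lead_coef_poly //= c2E.
have sX1 : size ('X + 1 : {poly rat}) = 2%N by rewrite -polyC1 size_XaddC.
have sp : size (('X + 1) ^+ A.+1 * j1 ^+ n0.+1) = (1 * A.+1 + (l + r) * n0.+1).+1.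
  by apply: size_mulS; apply: size_expS.
have sq : size ('X ^+ B.+1 * j2 ^+ n0.+1) = (B.+1 + (k + r) * n0.+1).+1.
  by apply: size_mulS; [rewrite size_polyXn | apply: size_expS].
set p := ('X + 1) ^+ A.+1 * j1 ^+ n0.+1 in sp *.
set q := 'X ^+ B.+1 * j2 ^+ n0.+1 in sq *.
set D := (B + (k + r) * n0.+1)%N.
have sq' : size q = D.+2 by rewrite sq addSn.
have sp' : size p = D.+2 by rewrite sp /D; nia.
have lX1 : lead_coef ('X + 1 : {poly rat}) = 1 by rewrite -polyC1 lead_coefXaddC.
have lpq : lead_coef p = lead_coef q.
  by rewrite /p /q !lead_coefM !lead_coef_exp lead_coefX lX1 lj1 lj2 !expr1n.
have hR := size_sub_eqlead _ _ _ sp' sq' lpq.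
have mge : (0 <= m)%R.
  rewrite /m Hn -addn1 (PoszD n0 1) addrK -PoszM.
  have : (r <= (k + l + r) * n0)%N.
    by rewrite (leq_trans (leq_addl (k + l) r)) // leq_pmulr //; lia.
  move: ((k + l + r) * n0)%N => w hw.
  clear -hw hs; lia.
case R0 : (p - q == 0).
  by rewrite (eqP R0) size_poly0; apply: le_trans mge; rewrite sub0r.
have W := wr_size (p - q) q D sq' (negbT R0) hR.
have Weq : (p - q)^`() * q - (p - q) * q^`() = p^`() * q - p * q^`()
  by rewrite derivB; ring.
rewrite Weq in W.
have Wid := W_id a b A B n0 j1 j2 Ha Hb.
rewrite -/p -/q in Wid; rewrite Wid in W.
have sg : (size (gW a b j1 j2) <= 1)%N by apply: deriv0_size; apply: gW_deriv.
have sh : (size (n0.+1%:R * gW a b j1 j2)%R <= 1)%N.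
  apply: leq_trans (size_polyMleq _ _) _.
  have h1 : (size (n0.+1%:R : {poly rat}) <= 1)%N by rewrite -polyC_natr size_polyC_leq1.
  lia.
have spre : size (('X + 1) ^+ A * 'X ^+ B * (j1 ^+ n0 * j2 ^+ n0))
    = (1 * A + B + ((l + r) * n0 + (k + r) * n0)).+1%N.
  apply: size_mulS; first apply: size_mulS.
  - exact: size_expS.
  - by rewrite size_polyXn.
  - by apply: size_mulS; apply: size_expS.
have := size_polyMleq (('X + 1) ^+ A * 'X ^+ B * (j1 ^+ n0 * j2 ^+ n0))
  (n0.+1%:R * gW a b j1 j2).
rewrite W spre => hle.
have hpos : (0 < size (p - q)%R)%N by rewrite lt0n size_poly_eq0 R0.
have key : ((size (p - q)%R).-1 + r <= k * n0 + l * n0 + r * n0 + s - 1)%N.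
  move: hle sh HA HB hpos; rewrite /D !mulnDl !mulnS.
  move: (size (p - q)%R) (size (n0.+1%:R * gW a b j1 j2)%R) (k * n0) (l * n0) (r * n0) => x h y1 y2 y3.
  clear; lia.
rewrite /m Hn.
have eM : (k + l + r)%:Z * (n0.+1%:Z - 1) = (k * n0 + l * n0 + r * n0)%N%:Z.
  by rewrite !PoszD !PoszM -addn1 PoszD; ring.
rewrite eM.
move: key hpos hs; move: (size (p - q)%R) (k * n0) (l * n0) (r * n0) => x y1 y2 y3.
clear; lia.
Qed.
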